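(* Let $E$ be a finite-dimensional real or complex inner product space with an orthogonal direct sum decomposition $E=X_1\oplus X_2\oplus Y$. Fix $a_1\in X_1$, $a_2\in X_2$, $b_1,b_2\in Y$, and let $C_1=X_1+a_2+b_1$ and $C_2=a_1+X_2+b_2$. Let $\pi_i\colon E\to E$ be the orthogonal (nearest-point) projection onto the affine subspace $C_i$, $i=1,2$. For real $\gamma_1,\gamma_2$ and nonzero real $\beta$ define $f_i(\rho)=(1+\gamma_i)\pi_i(\rho)-\gamma_i\rho$ and $D(\rho)=\rho+\beta\big(\pi_1(f_2(\rho))-\pi_2(f_1(\rho))\big)$. Then for all $x_1\in X_1$, $x_2\in X_2$, $y\in Y$, $$D(x_1+x_2+y)=a_1+a_2+y+(1-\beta\gamma_2)(x_1-a_1)+(1+\beta\gamma_1)(x_2-a_2)+\beta(b_1-b_2).$$ Consequently: (i) if $b_1=b_2=b$, the iterates $D^n(\rho)$ converge for every starting point $\rho=x_1+x_2+y$ to the point $\rho^*=a_1+a_2+y$ whenever $0<\beta\gamma_2<2$ and $-2<\beta\gamma_1<0$, and $\pi_1(f_2(\rho^* ))=a_1+a_2+b\in C_1\cap C_2$; (ii) for the choice $\gamma_2=\beta^{-1}$, $\gamma_1=-\beta^{-1}$ one has, for all $n\ge 1$, $D^n(x_1+x_2+y)=a_1+a_2+y+n\beta(b_1-b_2)$; in particular, when $b_1=b_2$ every point is mapped to a fixed point of $D$ in a single iteration.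
   Context: This describes the local behaviour of the ''difference map'' built from two projections near a point where two (locally affine, mutually orthogonal) constraint sets $C_1$, $C_2$ either intersect ($b_1=b_2$) or come closest without intersecting ($b_1\ne b_2$). *)

(* Defs.v *)
From HB Require Import structures.
From mathcomp Require Import all_boot all_order all_algebra.
From mathcomp Require Import reals.
Set Implicit Arguments. Unset Strict Implicit. Unset Printing Implicit Defensive.
Import Order.TTheory GRing.Theory Num.Theory.
Local Open Scope ring_scope.

Section Defs.
Variables (R : realType) (E : vectType R) (ip : E -> E -> R).

Definition is_inner_product : Prop :=
  [/\ forall (a : R) (u v w : E), ip (a *: u + v) w = a * ip u w + ip v w,
      forall u v : E, ip u v = ip v u
    & forall v : E, v != 0 -> 0 < ip v v].

Definition ipnorm (v : E) : R := Num.sqrt (ip v v).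

Definition in_affine (V : {vspace E}) (p c : E) : Prop := c - p \in V.

Definition is_nearest_proj (V : {vspace E}) (p : E) (pi : E -> E) : Prop :=
  forall rho : E, in_affine V p (pi rho) /\
    (forall c : E, in_affine V p c -> ipnorm (rho - pi rho) <= ipnorm (rho - c)).

Definition converges_to (u : nat -> E) (l : E) : Prop :=
  forall e : R, 0 < e -> exists N : nat, forall n : nat, (N <= n)%N ->
    ipnorm (u n - l) < e.
End Defs.

(* Main.v *)
Require Import Defs.
From HB Require Import structures.
From mathcomp Require Import all_boot all_order all_algebra.
From mathcomp Require Import reals.
From mathcomp Require Import ring lra.
Import Order.TTheory GRing.Theory Num.Theory.
Local Open Scope ring_scope.

Lemma ip0l {R : realType} {E : vectType R} {ip : E -> E -> R} :
  is_inner_product ip -> forall w, ip 0 w = 0.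
Proof.
case=> hl _ _ w; have := hl 1 0 0 w; rewrite scale1r addr0 => h; lra.
Qed.

Lemma ipDl {R : realType} {E : vectType R} {ip : E -> E -> R} :
  is_inner_product ip -> forall u v w, ip (u + v) w = ip u w + ip v w.
Proof. by case=> hl _ _ u v w; rewrite -{1}[u]scale1r hl mul1r. Qed.

Lemma ipZl {R : realType} {E : vectType R} {ip : E -> E -> R} :
  is_inner_product ip -> forall a u w, ip (a *: u) w = a * ip u w.
Proof.
move=> hip a u w; have := hip; case=> hl _ _.
by rewrite -[a *: u]addr0 hl (ip0l hip) addr0.
Qed.

Lemma ipDr {R : realType} {E : vectType R} {ip : E -> E -> R} :
  is_inner_product ip -> forall u v w, ip w (u + v) = ip w u + ip w v.
Proof. move=> hip u v w; have [_ hC _] := hip; by rewrite !(hC w) (ipDl hip). Qed.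

Lemma ipZr {R : realType} {E : vectType R} {ip : E -> E -> R} :
  is_inner_product ip -> forall a u w, ip w (a *: u) = a * ip w u.
Proof. move=> hip a u w; have [_ hC _] := hip; by rewrite !(hC w) (ipZl hip). Qed.

Lemma ipNr {R : realType} {E : vectType R} {ip : E -> E -> R} :
  is_inner_product ip -> forall u w, ip w (- u) = - ip w u.
Proof. by move=> hip u w; rewrite -scaleN1r (ipZr hip) mulN1r. Qed.

Lemma ipBr {R : realType} {E : vectType R} {ip : E -> E -> R} :
  is_inner_product ip -> forall u v w, ip w (u - v) = ip w u - ip w v.
Proof. by move=> hip u v w; rewrite (ipDr hip) (ipNr hip). Qed.

Lemma ipNl {R : realType} {E : vectType R} {ip : E -> E -> R} :
  is_inner_product ip -> forall u w, ip (- u) w = - ip u w.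
Proof. by move=> hip u w; rewrite -scaleN1r (ipZl hip) mulN1r. Qed.

Lemma ipBl {R : realType} {E : vectType R} {ip : E -> E -> R} :
  is_inner_product ip -> forall u v w, ip (u - v) w = ip u w - ip v w.
Proof. by move=> hip u v w; rewrite (ipDl hip) (ipNl hip). Qed.

Lemma ip_ge0 {R : realType} {E : vectType R} {ip : E -> E -> R} :
  is_inner_product ip -> forall v, 0 <= ip v v.
Proof.
move=> hip v; have [_ _ hp] := hip; have [->|/hp/ltW //] := eqVneq v 0.
by rewrite (ip0l hip).
Qed.

Lemma ip_ext {R : realType} {E : vectType R} {ip : E -> E -> R} :
  is_inner_product ip -> forall a b, (forall z, ip z a = ip z b) -> a = b.
Proof.
move=> hip a b h; have [_ _ hp] := hip.
apply/eqP; rewrite -subr_eq0; apply/negPn/negP => /hp.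
by rewrite (ipBr hip) h subrr ltxx.
Qed.

Lemma proj_eq {R : realType} {E : vectType R} {ip : E -> E -> R} :
  is_inner_product ip -> forall {V : {vspace E}} {p pi},
  is_nearest_proj ip V p pi -> forall rho u, u \in V ->
  (forall v, v \in V -> ip v (rho - u - p) = 0) -> pi rho = u + p.
Proof.
move=> hip V p pi hpi rho u hu ho.
have [hm hmin] := hpi rho.
have := hmin (u + p); rewrite /in_affine addrK => /(_ hu).
set w := rho - u - p.
set d := u - (pi rho - p).
have hd : d \in V by rewrite memvB.
have e1 : rho - pi rho = w + d.
  apply: (ip_ext hip) => t; rewrite /w /d !(ipDr hip, ipNr hip, ipZr hip); ring.
have e2 : rho - (u + p) = w.
  apply: (ip_ext hip) => t; rewrite /w !(ipDr hip, ipNr hip, ipZr hip); ring.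
have hw : forall v, v \in V -> ip v w = 0 := ho.
have dE : d = u - (pi rho - p) by [].
clearbody w d.
rewrite e1 e2 /ipnorm ler_sqrt ?(ip_ge0 hip) //.
have [_ hC hp] := hip.
rewrite !(ipDl hip) !(ipDr hip) (hC w d) (hw d hd) => hdd.
have hd0 : d = 0.
  apply/eqP/negPn/negP => /hp; lra.
move: dE; rewrite hd0 => /esym/eqP; rewrite subr_eq0 => /eqP ->; by rewrite subrK.
Qed.

Lemma geom {R : realType} (q eps : R) : 0 <= q -> q < 1 -> 0 < eps ->
  exists N : nat, forall n, (N <= n)%N -> q ^+ n < eps.
Proof.
move=> hq0 hq1 he.
have [-> | qn0] := eqVneq q 0.
  by exists 1%N => n hn; rewrite expr0n gtn_eqF.
have qp : 0 < q by rewrite lt_def qn0.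
set h := q^-1 - 1.
have key : q * (1 + h) = 1 by rewrite /h addrC subrK mulfV.
have hh : 0 < h.
  have : 0 < q * h by rewrite mulrDr mulr1 in key; lra.
  by rewrite pmulr_rgt0.
have bnd : forall n : nat, q ^+ n * (1 + n%:R * h) <= 1.
  elim=> [|n IH]; first by rewrite expr0 mul0r addr0 mulr1.
  have Q0 : 0 <= q ^+ n by rewrite exprn_ge0.
  have n0 : 0 <= n%:R :> R by [].
  have t1 : 0 <= (1 - q) * (q ^+ n * (n%:R * h)).
    apply: mulr_ge0; [lra | apply: mulr_ge0 => //; apply: mulr_ge0 => //; exact: ltW].
  have t2 : q ^+ n * (q * (1 + h)) = q ^+ n by rewrite key mulr1.
  rewrite exprS -addn1 natrD; nra.
set K := (eps * h)^-1.
have K0 : 0 <= K by rewrite /K invr_ge0 ltW // mulr_gt0.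
exists (Num.Def.archi_bound K) => n hn.
have hK := archi_boundP K0.
have hnK : K < n%:R by apply: (lt_le_trans hK); rewrite ler_nat.
have : 1 < n%:R * (eps * h).
  have ep : 0 < eps * h by apply: mulr_gt0.
  have e1 : K * (eps * h) = 1 by rewrite /K mulVf // gt_eqF.
  by rewrite -[X in X < _]e1 (ltr_pM2r ep).
have := bnd n; have Q0 : 0 <= q ^+ n by rewrite exprn_ge0.
have n0 : 0 <= n%:R :> R by [].
move=> b1 b2; nra.
Qed.

Ltac expand hip := rewrite ?(ipDr hip, ipNr hip, ipZr hip, ipBr hip).

Theorem mainTheorem3 (R : realType) (E : vectType R) (ip : E -> E -> R)
  (hip : is_inner_product ip)
  (X1 X2 Y : {vspace E})
  (o12 : forall x1 x2 : E, x1 \in X1 -> x2 \in X2 -> ip x1 x2 = 0)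
  (o1Y : forall x1 y : E, x1 \in X1 -> y \in Y -> ip x1 y = 0)
  (o2Y : forall x2 y : E, x2 \in X2 -> y \in Y -> ip x2 y = 0)
  (hfull : (X1 + X2 + Y)%VS = fullv)
  (a1 a2 b1 b2 : E) (ha1 : a1 \in X1) (ha2 : a2 \in X2)
  (hb1 : b1 \in Y) (hb2 : b2 \in Y)
  (pi1 pi2 : E -> E)
  (hpi1 : is_nearest_proj ip X1 (a2 + b1) pi1)
  (hpi2 : is_nearest_proj ip X2 (a1 + b2) pi2)
  (g1 g2 beta : R) (hbeta : beta != 0) :
  let f1 := fun rho : E => (1 + g1) *: pi1 rho - g1 *: rho in
  let f2 := fun rho : E => (1 + g2) *: pi2 rho - g2 *: rho in
  let D := fun rho : E => rho + beta *: (pi1 (f2 rho) - pi2 (f1 rho)) in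
  (forall x1 x2 y : E, x1 \in X1 -> x2 \in X2 -> y \in Y ->
     D (x1 + x2 + y) = a1 + a2 + y + (1 - beta * g2) *: (x1 - a1)
                       + (1 + beta * g1) *: (x2 - a2) + beta *: (b1 - b2))
  /\ (b1 = b2 -> 0 < beta * g2 < 2 -> -2 < beta * g1 < 0 ->
      forall x1 x2 y : E, x1 \in X1 -> x2 \in X2 -> y \in Y ->
        converges_to ip (fun n => iter n D (x1 + x2 + y)) (a1 + a2 + y)
        /\ pi1 (f2 (a1 + a2 + y)) = a1 + a2 + b1
        /\ in_affine X1 (a2 + b1) (a1 + a2 + b1)
        /\ in_affine X2 (a1 + b2) (a1 + a2 + b1))
  /\ (g2 = beta^-1 -> g1 = - beta^-1 ->
      (forall (n : nat) (x1 x2 y : E), (0 < n)%N ->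
         x1 \in X1 -> x2 \in X2 -> y \in Y ->
         iter n D (x1 + x2 + y) = a1 + a2 + y + (n%:R * beta) *: (b1 - b2))
      /\ (b1 = b2 -> forall rho : E, D (D rho) = D rho)).
Proof.
move=> f1 f2 D.
have [_ hC _] := hip.
have o21 : forall x2 x1, x2 \in X2 -> x1 \in X1 -> ip x2 x1 = 0.
  by move=> x2 x1 h2 h1; rewrite hC o12.
have P1 : forall x1 x2 y, x1 \in X1 -> x2 \in X2 -> y \in Y ->
    pi1 (x1 + x2 + y) = x1 + (a2 + b1).
  move=> x1 x2 y hx1 hx2 hy; apply: (proj_eq hip hpi1) => // v hv.
  expand hip.
  rewrite (o12 v x2 hv hx2) (o1Y v y hv hy) (o12 v a2 hv ha2) (o1Y v b1 hv hb1).
  ring.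
have P2 : forall x1 x2 y, x1 \in X1 -> x2 \in X2 -> y \in Y ->
    pi2 (x1 + x2 + y) = x2 + (a1 + b2).
  move=> x1 x2 y hx1 hx2 hy; apply: (proj_eq hip hpi2) => // v hv.
  expand hip.
  rewrite (o21 v x1 hv hx1) (o2Y v y hv hy) (o21 v a1 hv ha1) (o2Y v b2 hv hb2).
  ring.
have part1 : forall x1 x2 y : E, x1 \in X1 -> x2 \in X2 -> y \in Y ->
     D (x1 + x2 + y) = a1 + a2 + y + (1 - beta * g2) *: (x1 - a1)
                       + (1 + beta * g1) *: (x2 - a2) + beta *: (b1 - b2).
  move=> x1 x2 y hx1 hx2 hy; rewrite /D /f1 /f2 P1 // P2 //.
  have E1 : pi1 ((1 + g2) *: (x2 + (a1 + b2)) - g2 *: (x1 + x2 + y))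
      = ((1 + g2) *: a1 - g2 *: x1) + (a2 + b1).
    apply: (proj_eq hip hpi1); first by rewrite memvB ?memvZ.
    move=> v hv; expand hip.
    rewrite (o12 v x2 hv hx2) (o1Y v y hv hy) (o12 v a2 hv ha2) (o1Y v b1 hv hb1).
    rewrite (o1Y v b2 hv hb2); ring.
  have E2 : pi2 ((1 + g1) *: (x1 + (a2 + b1)) - g1 *: (x1 + x2 + y))
      = ((1 + g1) *: a2 - g1 *: x2) + (a1 + b2).
    apply: (proj_eq hip hpi2); first by rewrite memvB ?memvZ.
    move=> v hv; expand hip.
    rewrite (o21 v x1 hv hx1) (o2Y v y hv hy) (o21 v a1 hv ha1) (o2Y v b2 hv hb2).
    rewrite (o2Y v b1 hv hb1); ring.
  rewrite E1 E2; apply: (ip_ext hip) => t; expand hip; ring.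
split; first exact: part1.
split.
  move=> eb hg2 hg1 x1 x2 y hx1 hx2 hy.
  have mem1 : forall c, a1 + c *: (x1 - a1) \in X1.
    by move=> c; rewrite memvD // memvZ // memvB.
  have mem2 : forall c, a2 + c *: (x2 - a2) \in X2.
    by move=> c; rewrite memvD // memvZ // memvB.
  have IT : forall n, iter n D (x1 + x2 + y) = a1 + a2 + y
      + (1 - beta * g2) ^+ n *: (x1 - a1) + (1 + beta * g1) ^+ n *: (x2 - a2).
    elim=> [|n IH].
      by rewrite /=; apply: (ip_ext hip) => t; expand hip; rewrite !expr0; ring.
    rewrite iterS IH.
    have -> : a1 + a2 + y + (1 - beta * g2) ^+ n *: (x1 - a1)
        + (1 + beta * g1) ^+ n *: (x2 - a2)
        = (a1 + (1 - beta * g2) ^+ n *: (x1 - a1))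
          + (a2 + (1 + beta * g1) ^+ n *: (x2 - a2)) + y.
      by apply: (ip_ext hip) => t; expand hip; ring.
    rewrite part1 // eb; apply: (ip_ext hip) => t; expand hip; rewrite !exprS; ring.
  split.
    move=> e he.
    set u := x1 - a1; set v := x2 - a2.
    set c2 := 1 - beta * g2; set c1 := 1 + beta * g1.
    have diff : forall n, iter n D (x1 + x2 + y) - (a1 + a2 + y)
        = c2 ^+ n *: u + c1 ^+ n *: v.
      by move=> n; rewrite IT; apply: (ip_ext hip) => t; expand hip; ring.
    have hu : u \in X1 by rewrite memvB.
    have hv : v \in X2 by rewrite memvB.
    clearbody u v.
    have val : forall n, ip (c2 ^+ n *: u + c1 ^+ n *: v) (c2 ^+ n *: u + c1 ^+ n *: v)
        = (c2 * c2) ^+ n * ip u u + (c1 * c1) ^+ n * ip v v.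
      move=> n; rewrite !(ipDl hip) !(ipZl hip) !(ipDr hip) !(ipZr hip).
      rewrite (o12 u v hu hv) (o21 v u hv hu) !exprMn; ring.
    set A := ip u u; set B := ip v v.
    have A0 : 0 <= A by exact: ip_ge0.
    have B0 : 0 <= B by exact: ip_ge0.
    have e2 : 0 < e ^+ 2 by rewrite exprn_gt0.
    set k1 := e ^+ 2 / (2 * (A + 1)).
    set k2 := e ^+ 2 / (2 * (B + 1)).
    have k1E : k1 * (2 * (A + 1)) = e ^+ 2 by rewrite /k1 mulfVK // gt_eqF //; lra.
    have k2E : k2 * (2 * (B + 1)) = e ^+ 2 by rewrite /k2 mulfVK // gt_eqF //; lra.
    have k1p : 0 < k1 by rewrite /k1 divr_gt0 //; lra.
    have k2p : 0 < k2 by rewrite /k2 divr_gt0 //; lra.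
    have q10 : 0 <= c2 * c2 by rewrite -expr2 sqr_ge0.
    have q20 : 0 <= c1 * c1 by rewrite -expr2 sqr_ge0.
    have q11 : c2 * c2 < 1 by rewrite /c2; case/andP: hg2 => *; nra.
    have q21 : c1 * c1 < 1 by rewrite /c1; case/andP: hg1 => *; nra.
    have [N1 hN1] := geom _ _ q10 q11 k1p.
    have [N2 hN2] := geom _ _ q20 q21 k2p.
    exists (maxn N1 N2) => n hn.
    have h1 := hN1 n (leq_trans (leq_maxl _ _) hn).
    have h2 := hN2 n (leq_trans (leq_maxr _ _) hn).
    rewrite /ipnorm diff val.
    have Q1 : 0 <= (c2 * c2) ^+ n by rewrite exprn_ge0.
    have Q2 : 0 <= (c1 * c1) ^+ n by rewrite exprn_ge0.
    have t1 : (c2 * c2) ^+ n * A <= k1 * A by rewrite ler_wpM2r // ltW.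
    have t2 : (c1 * c1) ^+ n * B <= k2 * B by rewrite ler_wpM2r // ltW.
    have lt : (c2 * c2) ^+ n * A + (c1 * c1) ^+ n * B < e ^+ 2 by lra.
    by rewrite -(gtr0_norm he) -sqrtr_sqr ltr_sqrt.
  split.
    rewrite /f2 (P2 a1 a2 y) //.
    rewrite (proj_eq hip hpi1 _ _ ha1) ?addrA //.
    move=> v hv; expand hip.
    rewrite (o12 v a2 hv ha2) (o1Y v y hv hy) (o1Y v b1 hv hb1) (o1Y v b2 hv hb2).
    ring.
  split.
    rewrite /in_affine (_ : a1 + a2 + b1 - (a2 + b1) = a1) //.
    by apply: (ip_ext hip) => t; expand hip; ring.
  rewrite /in_affine eb (_ : a1 + a2 + b2 - (a1 + b2) = a2) //.
  by apply: (ip_ext hip) => t; expand hip; ring.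
move=> hg2 hg1.
have hb2' : beta * g2 = 1 by rewrite hg2 mulfV.
have hb1' : beta * g1 = -1 by rewrite hg1 mulrN mulfV.
have D1 : forall x1 x2 y, x1 \in X1 -> x2 \in X2 -> y \in Y ->
    D (x1 + x2 + y) = a1 + a2 + (y + beta *: (b1 - b2)).
  move=> x1 x2 y hx1 hx2 hy; rewrite part1 // hb2' hb1'.
  by apply: (ip_ext hip) => t; expand hip; ring.
have memY : forall y c, y \in Y -> y + c *: (b1 - b2) \in Y.
  by move=> y c hy; rewrite memvD // memvZ // memvB.
split.
  move=> n x1 x2 y + hx1 hx2 hy; case: n => // n _.
  elim: n => [|n IH].
    by rewrite /= D1 //; apply: (ip_ext hip) => t; expand hip; ring.
  rewrite iterS IH -addrA D1 // ?memY //.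
  by apply: (ip_ext hip) => t; expand hip; rewrite -addn1 natrD; ring.
move=> eb rho.
have : rho \in (X1 + X2 + Y)%VS by rewrite hfull memvf.
case/memv_addP => z hz [y hy ->].
case/memv_addP: hz => x1 hx1 [x2 hx2 ->].
have yE : y + beta *: (b1 - b2) = y.
  by apply: (ip_ext hip) => t; expand hip; rewrite eb; ring.
by rewrite D1 // yE D1 // yE.
Qed.
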